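(* Let $X\subset\mathbb{R}^n$ be bounded, let $X_I, X_G\subset X$ with $X_G$ compact, and let $\partial X_G$ denote the boundary of $X_G$. Let $f\colon X\to\mathbb{R}^n$ define the dynamics $x(k+1)=f(x(k))$ (assumed to have unique solutions). Fix $T\in\mathbb{N}_+$ and let $\Xi$ be the set of all trajectories $\xi=\{x(k)\}_{k=0}^T$ consistent with these dynamics and with $x(0)\in X_I$. Let $V\colon\mathbb{R}^n\to\mathbb{R}$ be continuous and fix $\delta$ with $\delta>-\inf_{x\in X_I}V(x)\geq 0$. Suppose that (i) $V(x)\le 0$ for all $x\in X_I$; (ii) $V(x)\ge-\delta$ for all $x\in\partial X_G$; (iii) $V(x)>-\delta$ for all $x\in X\setminus X_G$; (iv) $V(x)>0$ for all $x\in\mathbb{R}^n\setminus X$; (v) for every trajectory $\xi=\{x(k)\}_{k=0}^T\in\Xi$, $$V(x(k+1))-V(x(k))<-\frac1T\Big(\sup_{x\in X_I}V(x)+\delta\Big),\qquad k=0,\dots,k_G-1,$$ where $k_G:=\min\{k\in\{0,\dots,T\}: V(x(k))\le-\delta\}$, or $k_G=T$ if no such $k$ exists. Then $V$ is a reachability certificate: for every $\xi\in\Xi$ there exists $k\in\{0,\dots,T\}$ with $x(k)\in X_G$.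
   Context: Trajectories are finite sequences of states generated by the deterministic discrete-time dynamics from an initial state in $X_I$. *)

(* Defs.v *)
From HB Require Import structures.
From mathcomp Require Import all_boot all_order all_algebra.
From mathcomp Require Import all_classical all_reals all_analysis.
Set Implicit Arguments. Unset Strict Implicit. Unset Printing Implicit Defensive.
Import Order.TTheory GRing.Theory Num.Theory.
Import numFieldNormedType.Exports.
Local Open Scope classical_set_scope.
Local Open Scope ring_scope.

Definition boundary {T : topologicalType} (A : set T) : set T :=
  closure A `\` A^°.

(* xi is a trajectory of length T of x(k+1) = f(x(k)), f : X -> R^n,
   starting in XI.  f is given as a total function but is only ever
   applied to states in X. *)
Definition is_traj {R : realType} {n : nat} (X XI : set 'rV[R]_n)
  (f : 'rV[R]_n -> 'rV[R]_n) (T : nat) (xi : nat -> 'rV[R]_n) : Prop :=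
  XI (xi 0%N) /\
  (forall k : nat, (k < T)%N -> X (xi k) /\ xi k.+1 = f (xi k)).

Definition kG {R : realType} {n : nat} (V : 'rV[R]_n -> R) (delta : R)
  (T : nat) (xi : nat -> 'rV[R]_n) : nat :=
  minn (find (fun k => V (xi k) <= - delta) (iota 0 T.+1)) T.

(* Main.v *)
Require Import Defs.
From HB Require Import structures.
From mathcomp Require Import all_boot all_order all_algebra.
From mathcomp Require Import all_classical all_reals all_analysis.
From mathcomp Require Import lra.
Import Order.TTheory GRing.Theory Num.Theory.
Import numFieldNormedType.Exports.
Local Open Scope classical_set_scope.
Local Open Scope ring_scope.

Lemma aux1 (R : realType) (a b v0 jc c : R) :
  a <= v0 - jc -> b - a < - c -> b <= v0 - (jc + c).
Proof. move=> *; lra. Qed.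

Lemma aux2 (R : realType) (a v0 s d : R) :
  - d < a -> a <= v0 - (s + d) -> s < v0.
Proof. move=> *; lra. Qed.

Theorem proposition1 (R : realType) (n : nat)
  (X XI XG : set 'rV[R]_n) (f : 'rV[R]_n -> 'rV[R]_n) (T : nat)
  (V : 'rV[R]_n -> R) (delta : R) :
  bounded_set X -> XI `<=` X -> XG `<=` X -> compact XG ->
  (0 < T)%N ->
  continuous V ->
  (0 <= - ereal_inf [set (V x)%:E | x in XI])%E ->
  (- ereal_inf [set (V x)%:E | x in XI] < delta%:E)%E ->
  (forall x, XI x -> V x <= 0) ->
  (forall x, boundary XG x -> V x >= - delta) ->
  (forall x, (X `\` XG) x -> V x > - delta) ->
  (forall x, ~ X x -> V x > 0) ->
  (forall xi, is_traj X XI f T xi ->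
     forall k : nat, (k < kG V delta T xi)%N ->
       ((V (xi k.+1) - V (xi k))%:E <
          - ((ereal_sup [set (V x)%:E | x in XI] + delta%:E) / (T%:R)%:E))%E) ->
  forall xi, is_traj X XI f T xi ->
    exists k : nat, (k <= T)%N /\ XG (xi k).
Proof.
move=> _ _ _ _ T0 _ hinf0 hinfd hI _ hXG hnX hdec xi hxi.
have d0 : 0 < delta.
  by rewrite -lte_fin; apply: le_lt_trans hinfd.
apply: contrapT => hno.
have hgt : forall k, (k <= T)%N -> - delta < V (xi k).
  move=> k kT; have [Xk|nXk] := pselect (X (xi k)).
    by apply: hXG; split => // Gk; apply: hno; exists k.
  by apply: lt_trans (hnX _ nXk); rewrite oppr_lt0.
have hkG : kG V delta T xi = T.
  rewrite /kG hasNfind ?size_iota ?minnE ?subSnn ?subn1 //.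
  apply/hasPn => k; rewrite mem_iota add0n => /andP[_ kT].
  by rewrite -ltNge hgt.
have [xi0 _] := hxi.
set S := [set (V x)%:E | x in XI].
have Sub : (ereal_sup S <= 0)%E.
  by apply: ub_ereal_sup => _ [x Ix <-]; rewrite lee_fin hI.
have Slb : ((V (xi 0%N))%:E <= ereal_sup S)%E.
  by apply: ereal_sup_ubound; exists (xi 0%N).
have Sfin : ereal_sup S \is a fin_num.
  apply/fin_numPlt; apply/andP; split.
    by apply: lt_le_trans Slb; rewrite ltNyr.
  by apply: le_lt_trans Sub _; rewrite ltey.
set s := fine (ereal_sup S).
have Ss : ereal_sup S = s%:E by rewrite /s fineK.
have Vs : V (xi 0%N) <= s by rewrite -lee_fin -Ss.
set c := (s + delta) / T%:R.
have TR0 : (T%:R == 0 :> R) = false by rewrite pnatr_eq0; apply/negbTE; rewrite -lt0n.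
have step : forall k, (k < T)%N -> V (xi k.+1) - V (xi k) < - c.
  move=> k kT; have := hdec xi hxi k; rewrite hkG => /(_ kT).
  by rewrite Ss -EFinD inver TR0 -EFinM -EFinN lte_fin.
have tele : forall j, (j <= T)%N -> V (xi j) <= V (xi 0%N) - j%:R * c.
  elim=> [|j IH] jT; first by rewrite mul0r subr0.
  have := step j jT; have := IH (ltnW jT).
  rewrite -natr1 mulrDl mul1r; exact: aux1.
have := tele T (leqnn T); have := hgt T (leqnn T).
have -> : T%:R * c = s + delta.
  by rewrite /c mulrC -mulrA mulVf ?mulr1 // TR0.
move=> h1 h2; have := @aux2 R _ _ _ _ h1 h2.
by rewrite ltNge Vs.
Qed.
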